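(* Let $T$ be a rhombic alternative tableau of type $X\in B_n^r$ with tiling $\mathcal{T}$, and run the label-passing algorithm on $T$. Suppose that a label $J$ is passed along the line of a north-strip $\mathbf{n}$ southward out of a tile $\mathbf{t}$ of $\mathbf{n}$, and that no tile of $\mathbf{n}$ below $\mathbf{t}$ contains an $\alpha$. Then at the completion of the algorithm, the southeast boundary edge (external vertex) of $\mathbf{n}$ carries the label $\{J_{\max}\}$, where $J_{\max}=\max J$.
   Context: Words and diagrams. For $0\le r\le n$ let $B_n^r$ be the set of words $X\in\{H,L,0\}^n$ with exactly $r$ letters $L$. If $X$ has $k$ letters $H$, $r$ letters $L$ and $\ell$ letters $0$, its rhombic diagram $\Gamma(X)$ is the closed region bounded by two paths of unit steps, using the directions west (horizontal), south (vertical) and southwest (diagonal: a fixed unit vector strictly between west and south), both going from a point $P$ to a point $Q$: the northwest boundary consists of $\ell$ west steps, then $r$ southwest steps, then $k$ south steps; the southeast boundary is obtained by reading $X$ left to right and taking a west step for each $0$, a southwest step for each $L$, a south step for each $H$. A tiling of $\Gamma(X)$ is a tiling by unit rhombi of three kinds: squares (horizontal and vertical edges), tall rhombi (vertical and diagonal edges), short rhombi (horizontal and diagonal edges). A west-strip (resp. north-strip, northwest-strip) is a maximal set of tiles connected through shared vertical (resp. horizontal, diagonal) edges; each runs from an edge of the southeast boundary to an edge of the northwest boundary. Rhombic alternative tableaux. A rhombic alternative tableau (RAT) of type $X$ with tiling $\mathcal{T}$ is a filling of the tiles of $\mathcal{T}$, each tile empty or containing one of $\alpha,\beta,q$, where $\alpha$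 occurs only in squares and short rhombi and $\beta$ only in squares and tall rhombi, such that: (i) every tile in the same west-strip as a tile containing $\beta$ and to its left is empty; (ii) every tile in the same north-strip as a tile containing $\alpha$ and above it is empty; (iii) every tile not forced to be empty by (i),(ii) contains $\alpha$, $\beta$ or $q$. Label-passing algorithm. A label is a finite set of consecutive integers; for labels $C,D$ write $D\succ C$ if both are nonempty and $\min D=\max C+1$. Given a RAT $T$: through each west-strip draw a line through the midpoints of its vertical edges, through each north-strip a line through midpoints of its horizontal edges, and through each northwest-strip a line through midpoints of its diagonal edges (all passing through the tile centres). For every tile containing $\alpha$ erase the part of its north-strip line above the tile's centre; for every tile containing $\beta$ erase the part of its west-strip line to the left of the tile's centre. This yields a forest of binary trees whose branching vertices are the centres of tiles containing $\alpha$ or $\beta$, whose leaves (external vertices) are the southeast boundary edges and whose roots are northwest boundary edges; roots are red/green/blue according as they lie on a west-/northwest-/north-strip. Add a special trivial green root at $Q$ with one fictitious leaf. Order the roots: red roots from top to bottom, then green roots (starting with the special one) from southwest to northeast, then blue roots from left to right. Label the roots so that each root label has as many elements as its tree has leaves (one for the special root), each root's label is $\succ$ the label of the preceding root, and the union of all root labels is $\{1,\dots,n+1\}$. Labels are then passed from the roots towards the leaves (southeastward) along branches, unchanged along branches; when a label $B$ reaches a branching vertex $v$ it is split as $B=C\cup D$ with $D\succ C$, each of the two outgoing branches getting a label of size equal to its number of leaves, according to: (I) if $v$ lies in a rhombus (tall or short), $D$ goes to the outgoing branch along the northwest-strip; (II) if $v$ lies in a square containing $\alpha$, $D$ goes to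 the branch leaving eastward and $C$ to the branch leaving southward; (III) if $v$ lies in a square containing $\beta$, $D$ goes to the branch leaving southward and $C$ to the branch leaving eastward. At completion every southeast boundary edge carries a singleton label. *)

(* Defs.v *)
From HB Require Import structures.
From mathcomp Require Import all_boot.

Set Implicit Arguments.
Unset Strict Implicit.
Unset Printing Implicit Defensive.

Inductive letter := LH | LL | L0.

(* Order of the letters on the northwest boundary: 0 < L < H. *)
Definition rank (x : letter) : nat :=
  match x with L0 => 0 | LL => 1 | LH => 2 end.
Definition of_rank (n : nat) : letter :=
  match n with 0 => L0 | 1 => LL | _ => LH end.
Lemma rankK : cancel rank of_rank. Proof. by case. Qed.
HB.instance Definition _ := Equality.copy letter (can_type rankK).

Inductive sym := Alpha | Beta | Qsym.

Definition swap_at (w : seq nat) (p : nat) : seq nat :=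
  take p w ++ [:: nth 0 w p.+1; nth 0 w p] ++ drop p.+2 w.

Section Rhombic.
Variable X : seq letter.
Variable s : seq nat.         (* the tiling, as a sequence of tile additions *)
Variable F : nat -> option sym. (* the filling: None = empty tile *)

(* strips are identified with the positions 0..n-1 of the letters of X
   (= southeast boundary edges); strip i is a west-strip / northwest-strip /
   north-strip according as X_i is H / L / 0. *)
Definition letterOf (i : nat) : letter := nth L0 X i.

(* the boundary path after the first k tiles have been added *)
Fixpoint word_at (k : nat) : seq nat :=
  match k with
  | 0 => iota 0 (size X)
  | k'.+1 => swap_at (word_at k') (nth 0 s k')
  end.

(* the two strips crossing at tile t *)
Definition upper (t : nat) : nat := nth 0 (word_at t) (nth 0 s t).
Definition lower (t : nat) : nat := nth 0 (word_at t) (nth 0 s t).+1.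
Definition in_tile (t i : nat) : bool := (i == upper t) || (i == lower t).

Definition valid_step (t : nat) : bool :=
  ((nth 0 s t).+1 < size X) && (rank (letterOf (lower t)) < rank (letterOf (upper t))).

(* s encodes a tiling of Gamma(X): every step adds a unit rhombus on the
   current path, and the final path is the northwest boundary 0^l L^r H^k. *)
Definition is_tiling : Prop :=
  (forall t, t < size s -> valid_step t) /\
  sorted (fun i j => rank (letterOf i) <= rank (letterOf j)) (word_at (size s)).

Definition forced_empty (t : nat) : Prop :=
  exists t0, t0 < t /\
    ((F t0 = Some Beta /\ in_tile t (upper t0)) \/
     (F t0 = Some Alpha /\ in_tile t (lower t0))).

Definition is_RAT : Prop :=
  [/\ (* alpha only in squares and short rhombi *)
      (forall t, t < size s -> F t = Some Alpha -> letterOf (lower t) = L0),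
      (* beta only in squares and tall rhombi *)
      (forall t, t < size s -> F t = Some Beta -> letterOf (upper t) = LH),
      (forall t t', t < t' -> t' < size s -> F t = Some Beta ->
          in_tile t' (upper t) -> F t' = None),
      (forall t t', t < t' -> t' < size s -> F t = Some Alpha ->
          in_tile t' (lower t) -> F t' = None) &
      (forall t, t < size s -> ~ forced_empty t -> F t <> None)].

(* branching vertex at tile t: (strip whose line ends at t, continuing strip) *)
Definition vert (t : nat) : option (nat * nat) :=
  match F t with
  | Some Alpha => Some (lower t, upper t)
  | Some Beta => Some (upper t, lower t)
  | _ => None
  end.

(* number of leaves of the branch of each strip just northwest of the path
   word_at k (None = line erased) *)
Fixpoint cnt_at (k : nat) : nat -> option nat :=
  match k with
  | 0 => fun _ => Some 1
  | k'.+1 =>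
      let c := cnt_at k' in
      match vert k' with
      | Some (a, b) => fun i =>
          if i == a then None
          else if i == b then
            (match c a, c b with Some x, Some y => Some (x + y) | _, _ => None end)
          else c i
      | None => c
      end
  end.

Definition final_cnt := cnt_at (size s).
Definition final_word := word_at (size s).

(* roots in order: red top to bottom, special green root (None), green
   southwest to northeast, blue left to right; only surviving lines. *)
Definition root_order : seq (option nat) :=
  [seq o <- [seq Some i | i <- final_word & letterOf i == LH] ++
            None :: [seq Some i | i <- rev final_word & letterOf i == LL] ++
                    [seq Some i | i <- rev final_word & letterOf i == L0]
     | if o is Some i then final_cnt i != None else true].

Definition root_size (o : option nat) : nat :=
  match o with None => 1 | Some i => odflt 0 (final_cnt i) end.

Definition root_lab (i : nat) : option (seq nat) :=
  if Some i \in root_order then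
    let k := index (Some i) root_order in
    Some (iota (1 + sumn [seq root_size o | o <- take k root_order])
               (root_size (Some i)))
  else None.

(* one step of label passing, through tile t (northwest to southeast) *)
Definition pass (t : nat) (lab : nat -> option (seq nat)) : nat -> option (seq nat) :=
  match vert t with
  | Some (a, b) =>
      let B := odflt [::] (lab b) in
      let c := odflt 0 (cnt_at t a) in
      fun i => if i == a then Some (take c B)
               else if i == b then Some (drop c B)
               else lab i
  | None => lab
  end.

Fixpoint back (d : nat) : nat -> option (seq nat) :=
  match d with
  | 0 => root_lab
  | d'.+1 => pass (size s - d'.+1) (back d')
  end.

(* labels carried by the strip lines on the path word_at k (just southeast of
   tiles k, k+1, ...);  lab_at 0 = labels of the southeast boundary edges. *)
Definition lab_at (k : nat) : nat -> option (seq nat) := back (size s - k).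

End Rhombic.

(* Main.v *)
Require Import Defs.
From mathcomp Require Import all_boot zify.
Set Implicit Arguments.
Unset Strict Implicit.

Lemma swap_perm (w : seq nat) p : p.+1 < size w -> perm_eq (swap_at w p) w.
Proof.
move=> h; rewrite /swap_at.
have e : drop p w = nth 0 w p :: nth 0 w p.+1 :: drop p.+2 w.
  by rewrite (drop_nth 0 (ltnW h)) (drop_nth 0 h).
rewrite -[X in perm_eq _ X](cat_take_drop p w) e perm_cat2l.
by apply/permP => q /=; rewrite addnCA.
Qed.

Lemma word_perm X s k : k <= size s -> (forall t, t < size s -> valid_step X s t) ->
  perm_eq (word_at X s k) (iota 0 (size X)).
Proof.
move=> + hv; elim: k => [|k IH] hk /=; first exact: perm_refl.
have /andP [h1 _] := hv k hk.
have p := IH (ltnW hk).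
apply: (perm_trans _ p); apply: swap_perm.
by rewrite (perm_size p) size_iota.
Qed.

Lemma strip_lt X s k : k < size s -> (forall t, t < size s -> valid_step X s t) ->
  upper X s k < size X /\ lower X s k < size X.
Proof.
move=> hk hv; have p := @word_perm X s k (ltnW hk) hv.
have /andP [h1 _] := hv k hk.
have hs : size (word_at X s k) = size X by rewrite (perm_size p) size_iota.
rewrite /upper /lower; split.
- have : nth 0 (word_at X s k) (nth 0 s k) \in iota 0 (size X).
    by rewrite -(perm_mem p) mem_nth // hs ltnW.
  by rewrite mem_iota.
- have : nth 0 (word_at X s k) (nth 0 s k).+1 \in iota 0 (size X).
    by rewrite -(perm_mem p) mem_nth // hs.
  by rewrite mem_iota.
Qed.

Lemma vert_in X s F k a b : vert X s F k = Some (a,b) ->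
  [/\ in_tile X s k a, in_tile X s k b & F k <> None].
Proof.
rewrite /vert /in_tile; case: (F k) => [[]|] // [<- <-];
  by rewrite !eqxx ?orbT.
Qed.

Lemma vert_blocked X s F t0 k i b0 : is_RAT X s F -> t0 < k -> k < size s ->
  vert X s F t0 = Some (i,b0) -> in_tile X s k i -> F k = None.
Proof.
case=> _ _ hb ha _ h1 h2; rewrite /vert.
case e: (F t0) => [[]|] // [<- _] hin.
- exact: (ha t0 k).
- exact: (hb t0 k).
Qed.

Lemma cnt_none X s F k : is_RAT X s F -> k <= size s -> forall i,
  cnt_at X s F k i = None -> exists2 t0, t0 < k & exists b, vert X s F t0 = Some (i,b).
Proof.
move=> hR; elim: k => [|k IH] hk i //=.
case hv: (vert X s F k) => [[a b]|]; last first.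
  by move=> /(IH (ltnW hk)) [t0 h1 h2]; exists t0 => //; exact: ltnW.
have [ia ib nF] := vert_in hv.
have hS : forall j, in_tile X s k j -> cnt_at X s F k j <> None.
  move=> j hj /(IH (ltnW hk)) [t0 h1 [b0 h2]].
  by apply: nF; apply: (vert_blocked hR h1 hk h2).
case: eqP => [->|_]; first by exists k => //; exists b.
case: eqP => [->|_].
  case ea: (cnt_at X s F k a) => [x|]; last by exfalso; exact: (hS a ia).
  case eb: (cnt_at X s F k b) => [y|] //; by exfalso; exact: (hS b ib).
by move=> /(IH (ltnW hk)) [t0 h1 h2]; exists t0 => //; exact: ltnW.
Qed.

Lemma cnt_some X s F k a b : is_RAT X s F -> k < size s ->
  vert X s F k = Some (a,b) ->
  (exists ma, cnt_at X s F k a = Some ma) /\ exists mb, cnt_at X s F k b = Some mb.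
Proof.
move=> hR hk hv; have [ia ib nF] := vert_in hv.
have hS : forall j, in_tile X s k j -> exists m, cnt_at X s F k j = Some m.
  move=> j hj; case e: (cnt_at X s F k j) => [m|]; first by exists m.
  have [t0 h1 [b0 h2]] := cnt_none hR (ltnW hk) e.
  by exfalso; apply: nF; apply: (vert_blocked hR h1 hk h2).
by split; apply: hS.
Qed.

Lemma lab_step X s F k : k < size s ->
  lab_at X s F k = pass X s F k (lab_at X s F k.+1).
Proof.
rewrite /lab_at => hk.
have -> : size s - k = (size s - k.+1).+1 by lia.
rewrite /=; congr pass; lia.
Qed.

Lemma vert_ab X s F k a b : vert X s F k = Some (a,b) ->
  (a = lower X s k /\ b = upper X s k) \/ (a = upper X s k /\ b = lower X s k).
Proof. by rewrite /vert; case: (F k) => [[]|] // [<- <-]; [left|right]. Qed.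

Lemma root_mem X s F i m : is_tiling X s -> i < size X ->
  final_cnt X s F i = Some m -> Some i \in root_order X s F.
Proof.
case=> hv _ hi hc.
have p := @word_perm X s (size s) (leqnn _) hv.
have iw : i \in final_word X s by rewrite /final_word (perm_mem p) mem_iota.
rewrite /root_order mem_filter hc /= mem_cat inE /= mem_cat.
case e: (letterOf X i).
- by rewrite map_f // mem_filter e.
- by apply/orP; right; apply/orP; left; apply: map_f; rewrite mem_filter e mem_rev.
- by apply/orP; right; apply/orP; right; apply: map_f; rewrite mem_filter e mem_rev.
Qed.

Lemma lab_inv X s F : is_tiling X s -> is_RAT X s F -> forall d, d <= size s ->
  forall i m, i < size X -> cnt_at X s F (size s - d) i = Some m ->
  exists x, lab_at X s F (size s - d) i = Some (iota x m).
Proof.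
move=> hT hR; elim=> [|d IH] hd i m hi.
- rewrite subn0 => hc.
  rewrite /lab_at subnn /= /root_lab (root_mem hT hi hc) /=.
  by eexists; rewrite /root_size /final_cnt hc.
- set k := size s - d.+1.
  have hk : k < size s by rewrite /k; lia.
  have ek : size s - d = k.+1 by rewrite /k; lia.
  rewrite ek in IH; have {}IH := IH (ltnW hd).
  rewrite lab_step // /pass.
  case hv: (vert X s F k) => [[a b]|]; last first.
    by move=> hc; apply: IH => //=; rewrite hv.
  have [[ma ea] [mb eb]] := cnt_some hR hk hv.
  have [ha hb] : a < size X /\ b < size X.
    by have [] := strip_lt hk hT.1; case: (vert_ab hv) => -[-> ->].
  have nab : b != a.
    have /andP [_ hr] := hT.1 k hk.
    apply/eqP => eab; move: hr; case: (vert_ab hv) => -[ha' hb'];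
      by rewrite -ha' -hb' eab ltnn.
  have cb : cnt_at X s F k.+1 b = Some (ma + mb).
    by rewrite /= hv (negbTE (nab : b != a)) eqxx ea eb.
  have [x ex] := IH b (ma + mb) hb cb.
  case: eqP => [->|nia].
    rewrite ea => -[<-]; exists x; rewrite ex /=.
    by rewrite iotaD take_size_cat ?size_iota.
  case: eqP => [->|nib].
    rewrite eb => -[<-]; exists (x + ma); rewrite ex /=.
    by rewrite ea iotaD drop_size_cat ?size_iota.
  move=> hc; apply: IH => //=; rewrite hv.
  by move/eqP/negbTE: nia => ->; move/eqP/negbTE: nib => ->.
Qed.

Lemma vert_cases X s F k a b : vert X s F k = Some (a,b) ->
  (F k = Some Alpha /\ a = lower X s k /\ b = upper X s k) \/
  (F k = Some Beta /\ a = upper X s k /\ b = lower X s k).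
Proof. by rewrite /vert; case: (F k) => [[]|] // [<- <-]; [left|right]. Qed.

Lemma max_iota y m : \max_(j <- iota y m.+1) j = y + m.
Proof.
elim: m y => [|m IH] y; first by rewrite big_cons big_nil; lia.
by rewrite [iota _ _]/= big_cons IH; lia.
Qed.

Lemma not_erased X s F t a : is_tiling X s -> letterOf X a = L0 ->
  (forall t', t' < t -> in_tile X s t' a -> F t' <> Some Alpha) ->
  forall k b, k < t -> k < size s -> vert X s F k = Some (a, b) -> False.
Proof.
move=> hT hL hA k b hk hks hv.
case: (vert_cases hv) => [[hF [ea _]]|[hF [ea _]]].
- by apply: (hA k hk) => //; rewrite /in_tile -ea eqxx orbT.
- have /andP [_ hr] := hT.1 k hks.
  by move: hr; rewrite -ea hL.
Qed.

Theorem lemma3p8 (n r : nat) (X : seq letter) (s : seq nat)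
  (F : nat -> option sym) (t a : nat) (J : seq nat) :
  size X = n -> count_mem LL X = r ->
  is_tiling X s -> is_RAT X s F ->
  t < size s -> in_tile X s t a -> letterOf X a = L0 ->
  lab_at X s F t a = Some J ->
  (forall t', t' < t -> in_tile X s t' a -> F t' <> Some Alpha) ->
  lab_at X s F 0 a = Some [:: \max_(j <- J) j].
Proof.
move=> _ _ hT hR ht hin hL hJ hA.
have ha : a < size X.
  have [] := strip_lt ht hT.1.
  by case/orP: hin => /eqP ->.
have [m em] : exists m, cnt_at X s F t a = Some m.
  case e: (cnt_at X s F t a) => [m|]; first by exists m.
  have [t0 h1 [b0 h2]] := cnt_none hR (ltnW ht) e.
  by exfalso; apply: (not_erased hT hL hA h1 (ltn_trans h1 ht) h2).
have [y ey] : exists y, J = iota y m.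
  have := @lab_inv X s F hT hR (size s - t) (leq_subr _ _) a m ha.
  have -> : size s - (size s - t) = t by lia.
  by move=> /(_ em) [y]; rewrite hJ => -[->]; exists y.
have hdrop : forall d, d <= t -> exists c, lab_at X s F (t - d) a = Some (drop c J).
  elim=> [|d IH] hd; first by exists 0; rewrite subn0 drop0.
  have [c ec] := IH (ltnW hd).
  have hk : t - d.+1 < size s by lia.
  have ek : (t - d.+1).+1 = t - d by lia.
  rewrite lab_step // ek /pass.
  case hv: (vert X s F (t - d.+1)) => [[a' b']|]; last by exists c.
  case: eqP => [ea|_].
    by exfalso; rewrite -ea in hv; apply: (not_erased hT hL hA _ hk hv); lia.
  case: eqP => [eb|_]; last by exists c.
  by rewrite -eb ec /=; eexists; rewrite drop_drop.
have [c ec] := hdrop t (leqnn t).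
rewrite subnn in ec.
have [z ez] := @lab_inv X s F hT hR (size s) (leqnn _) a 1 ha (ltac:(by rewrite subnn)).
rewrite subnn in ez.
rewrite ec ey drop_iota in ez |- *.
case: ez => ez.
have [e1 e2] : m - c = 1 /\ y + c = z.
  have := congr1 size ez; rewrite !size_iota => h1.
  by split => //; move: ez; rewrite h1 => -[].
rewrite ez /=.
have -> : m = (m.-1).+1 by lia.
rewrite max_iota; congr (Some [:: _]); lia.
Qed.
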